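(* As subgroups of $SU(3)$, $$D(9,1,1;2,1,1)\subsetneq D(9,1,1;2,0,1)=D(9,1,1;2,0,0)=D(18,1,1;2,1,1)=D(18,1,1;2,0,0)=D(18,1,1;2,0,1).$$ In particular all five groups on the right are isomorphic to $Fr(162\times 4)$.
   Context: For a positive integer $n$ and integers $a,b$, let $\eta=e^{2i\pi/n}$ and $F(n,a,b)=\mathrm{diag}(\eta^a,\eta^b,\eta^{-a-b})$. For a positive integer $d$ and integers $r,s$, let $\delta=e^{2i\pi/d}$ and $\tilde G(d,r,s)=\begin{pmatrix}\delta^r&0&0\\0&0&\delta^s\\0&-\delta^{-r-s}&0\end{pmatrix}$. Let $E=\begin{pmatrix}0&1&0\\0&0&1\\1&0&0\end{pmatrix}$ and $D(n,a,b;d,r,s)=\langle F(n,a,b),E,\tilde G(d,r,s)\rangle\subset SU(3)$. Let $\omega=e^{2i\pi/3}$, $J$ the antidiagonal matrix with antidiagonal entries $1$, $G_1=\mathrm{diag}(e^{7i\pi/9},-e^{4i\pi/9},-e^{7i\pi/9})$, $G_2=\begin{pmatrix}-\tfrac12 e^{4i\pi/9}&\tfrac{1}{\sqrt2}e^{7i\pi/9}&\tfrac12 e^{4i\pi/9}\\ \tfrac{1}{\sqrt2}e^{7i\pi/9}&0&\tfrac{1}{\sqrt2}e^{7i\pi/9}\\ \tfrac12 e^{4i\pi/9}&\tfrac{1}{\sqrt2}e^{7i\pi/9}&-\tfrac12 e^{4i\pi/9}\end{pmatrix}$, $FUM=-\omega J$, $Fr(162\times 4)=\langle G_1,G_2,FUM\rangle$.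 *)

(* Defs.v *)
From HB Require Import structures.
From mathcomp Require Import all_boot all_order all_algebra all_field.
Set Implicit Arguments. Unset Strict Implicit. Unset Printing Implicit Defensive.
Import Order.TTheory GRing.Theory Num.Theory.
Local Open Scope ring_scope.

(* e^{i pi / n} : the n-th root of -1 with minimal nonnegative argument *)
Definition epi (n : nat) : algC := n.-root (-1).
Definition eta (n : nat) : algC := epi n ^+ 2.

Definition mx3 (a b c d e f g h k : algC) : 'M[algC]_3 :=
  \matrix_(i < 3, j < 3)
    match nat_of_ord i, nat_of_ord j with
    | 0, 0 => a | 0, 1 => b | 0, _ => c
    | 1, 0 => d | 1, 1 => e | 1, _ => f
    | _, 0 => g | _, 1 => h | _, _ => k
    end.

Definition Fmx (n : nat) (a b : int) : 'M[algC]_3 :=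
  mx3 (eta n ^ a) 0 0  0 (eta n ^ b) 0  0 0 (eta n ^ (- a - b)).

Definition Gtmx (d : nat) (r s : int) : 'M[algC]_3 :=
  mx3 (eta d ^ r) 0 0  0 0 (eta d ^ s)  0 (- eta d ^ (- r - s)) 0.

Definition Emx : 'M[algC]_3 := mx3 0 1 0  0 0 1  1 0 0.

Inductive gen (S : seq 'M[algC]_3) : 'M[algC]_3 -> Prop :=
  | gen_in x : x \in S -> gen S x
  | gen_one : gen S 1%:M
  | gen_mul x y : gen S x -> gen S y -> gen S (x *m y)
  | gen_inv x : gen S x -> gen S (invmx x).

Definition Dgrp (n : nat) (a b : int) (d : nat) (r s : int) : 'M[algC]_3 -> Prop :=
  gen [:: Fmx n a b; Emx; Gtmx d r s].

Definition omega : algC := eta 3.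
Definition Jmx : 'M[algC]_3 := mx3 0 0 1  0 1 0  1 0 0.
Definition G1mx : 'M[algC]_3 :=
  mx3 (epi 9 ^+ 7) 0 0  0 (- epi 9 ^+ 4) 0  0 0 (- epi 9 ^+ 7).
Definition G2mx : 'M[algC]_3 :=
  let p := epi 9 ^+ 4 in let q := epi 9 ^+ 7 in let t := (sqrtC 2)^-1 in
  mx3 (- p / 2) (t * q) (p / 2)
      (t * q) 0 (t * q)
      (p / 2) (t * q) (- p / 2).
Definition FUMmx : 'M[algC]_3 := - omega *: Jmx.
Definition Fr162x4 : 'M[algC]_3 -> Prop := gen [:: G1mx; G2mx; FUMmx].

Definition set_eq (P Q : 'M[algC]_3 -> Prop) := forall x, P x <-> Q x.
Definition strict_sub (P Q : 'M[algC]_3 -> Prop) :=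
  (forall x, P x -> Q x) /\ exists x, Q x /\ ~ P x.

Definition grp_iso (P Q : 'M[algC]_3 -> Prop) :=
  exists f : 'M[algC]_3 -> 'M[algC]_3,
    [/\ forall x, P x -> Q (f x),
        forall x y, P x -> P y -> f x = f y -> x = y,
        forall y, Q y -> exists2 x, P x & f x = y
      & forall x y, P x -> P y -> f (x *m y) = f x *m f y].

(* Main.v *)
Require Import Defs.
From HB Require Import structures.
From mathcomp Require Import all_boot all_order all_algebra all_field.
From mathcomp Require Import ring lra zify.
Set Implicit Arguments. Unset Strict Implicit. Unset Printing Implicit Defensive.
Import Order.TTheory GRing.Theory Num.Theory.
Local Open Scope ring_scope.


Definition cx (x y : algR) : algC := algRval x + 'i * algRval y.

Lemma cxM x y u v : cx x y * cx u v = cx (x * u - y * v) (x * v + u * y).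
Proof. by rewrite /cx mulC_rect !rmorphB !rmorphD !rmorphM. Qed.

Lemma cx_inj x y u v : cx x y = cx u v -> x = u /\ y = v.
Proof.
move=> h; have hr := congr1 (@Re _) h; have hi := congr1 (@Im _) h.
rewrite /cx !Re_rect ?algRvalP // in hr; rewrite /cx !Im_rect ?algRvalP // in hi.
by split; apply: val_inj.
Qed.

Lemma cx_dec (w : algC) : exists x y, w = cx x y.
Proof. by exists (in_algR (Creal_Re w)), (in_algR (Creal_Im w)); exact: Crect. Qed.

Lemma cxN1 : -1 = cx (-1) 0.
Proof. by rewrite /cx rmorphN1 rmorph0 mulr0 addr0. Qed.

Lemma cx_Re x y : 'Re (cx x y) = algRval x.
Proof. by rewrite /cx Re_rect ?algRvalP. Qed.
Lemma cx_Im x y : 'Im (cx x y) = algRval y.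
Proof. by rewrite /cx Im_rect ?algRvalP. Qed.

Lemma cx_norm x y : `|cx x y| ^+ 2 = algRval (x ^+ 2 + y ^+ 2).
Proof. by rewrite /cx normC2_rect ?algRvalP // rmorphD !rmorphXn. Qed.

Lemma cx3 x y : cx x y ^+ 3 = cx (x^+3 - 3 * x * y^+2) (3 * x^+2 * y - y^+3).
Proof.
rewrite exprSr expr2 !cxM; congr cx; ring.
Qed.

Lemma cube_case x y : cx x y ^+ 3 = -1 ->
  (x = -1 /\ y = 0) \/ (x = 1/2 /\ y ^+ 2 = 3/4).
Proof.
rewrite cx3 cxN1 => /cx_inj [h1 h2].
have : y * (3 * x^+2 - y^+2) = 0 by rewrite -h2; ring.
move/eqP; rewrite mulf_eq0 => /orP [/eqP y0| /eqP h3].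
  left; split => //.
  move: h1; rewrite y0 => h1.
  have : (x + 1) * (x^+2 - x + 1) = 0 by rewrite -[0](subrr (-1)) -{1}h1; ring.
  move/eqP; rewrite mulf_eq0 => /orP [/eqP h|/eqP h]; first by lra.
  exfalso; have := sqr_ge0 (2 * x - 1); nra.
right.
have hy : y^+2 = 3 * x^+2 by lra.
have hxy := congr1 (fun t => x * t) hy; simpl in hxy.
have : (2 * x - 1) * (4 * x^+2 + 2 * x + 1) = 0 by lra.
move/eqP; rewrite mulf_eq0 => /orP [/eqP h|/eqP h]; last by exfalso; have := sqr_ge0 (4 * x + 1); nra.
have hx : x = 1/2 by lra.
by split => //; nra.
Qed.


Lemma ivt_root : exists X : algR, 9/10 <= X <= 1 /\ 8 * X^+3 - 6 * X - 1 = 0.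
Proof.
pose p : {poly algR} := 8%:P * 'X^3 - 6%:P * 'X - 1%:P.
have h1 : (9/10 : algR) <= 1 by lra.
have h2 : p.[9/10] <= 0 <= p.[1].
  rewrite /p !(hornerD, hornerN, hornerM, hornerC, hornerXn, hornerX); apply/andP; split; lra.
have [X hX rX] := poly_ivt h1 h2.
exists X; split => //.
move: rX; rewrite /root /p !(hornerD, hornerN, hornerM, hornerC, hornerXn, hornerX) => /eqP h.
rewrite !exprS expr0 mulr1; lra.
Qed.

Lemma big_root9 : exists X Y : algR, 9/10 <= X /\ 0 <= Y /\ Y^+2 = 1 - X^+2 /\ cx X Y ^+ 9 = -1.
Proof.
have [X [/andP [X1 X2] rX]] := ivt_root.
pose Y := Num.sqrt (1 - X^+2).
have Y0 : 0 <= Y by exact: sqrtr_ge0.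
have YY : Y^+2 = 1 - X^+2 by rewrite sqr_sqrtr //; nra.
exists X, Y; do 3! (split => //).
have -> : cx X Y ^+ 9 = (cx X Y ^+ 3) ^+ 3 by rewrite -exprM.
rewrite cx3.
set u := _ - _; set v := _ - _.
have hu : u = 1/2 by rewrite /u; nra.
have hv : v ^+ 2 = 3/4.
  rewrite /v.
  have -> : (3 * X ^+ 2 * Y - Y ^+ 3)^+2 = Y^+2 * (3 * X^+2 - Y^+2)^+2 by ring.
  rewrite YY.
  have -> : (1 - X ^+ 2) * (3 * X ^+ 2 - (1 - X ^+ 2)) ^+ 2 = 1 - 4 * (4 * X^+3 - 3 * X)^+2 / 4.
    by field.
  have -> : 4 * X ^+ 3 - 3 * X = 1/2 by lra.
  by field.
rewrite cx3 cxN1 hu; congr cx.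
- have -> : (1 / 2) ^+ 3 - 3 * (1 / 2) * v ^+ 2 = 1/8 - 3/2 * v^+2 by field.
  by rewrite hv; field.
- have -> : 3 * (1 / 2) ^+ 2 * v - v ^+ 3 = v * (3/4 - v^+2) by field.
  by rewrite hv subrr mulr0.
Qed.


Lemma norm1_root n (w : algC) : (0 < n)%N -> w ^+ n = -1 -> `|w| = 1.
Proof.
move=> n0 h; have := congr1 (fun t => `|t|) h; rewrite /= normrX normrN1.
by move/eqP; rewrite pexpr_eq1 // => /eqP.
Qed.

Lemma cx_norm1 n x y : (0 < n)%N -> cx x y ^+ n = -1 -> x^+2 + y^+2 = 1.
Proof.
move=> n0 h; have := cx_norm x y; rewrite (norm1_root n0 h) expr1n => h1.
have h2 : algRval (x^+2+y^+2) = algRval 1 by rewrite -h1 rmorph1.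
exact: val_inj h2.
Qed.

Lemma epi_spec n : (1 < n)%N -> exists x y, epi n = cx x y /\ epi n ^+ n = -1 /\
   0 <= y /\ x^+2 + y^+2 = 1 /\
   (forall X Y, 0 <= Y -> cx X Y ^+ n = -1 -> X <= x).
Proof.
move=> n1; have n0 : (0 < n)%N by apply: ltn_trans n1.
have en : epi n ^+ n = -1 by rewrite /epi rootCK.
have [x [y exy]] := cx_dec (epi n).
exists x, y; split => //; split => //; split.
  by have : 0 <= 'Im (epi n) := Im_rootC_ge0 (-1) n1; rewrite exy cx_Im.
split; first by apply: (cx_norm1 n0); rewrite -exy.
move=> X Y Y0 h.
have : 0 <= 'Im (cx X Y) -> 'Re (cx X Y) <= 'Re (epi n) := rootC_Re_max n0 h.
by rewrite cx_Im exy !cx_Re => /(_ Y0).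
Qed.

Definition aa := epi 9.
Definition bb := epi 18.
Definition cc := epi 3.

Lemma aa_spec : exists x y, aa = cx x y /\ aa ^+ 9 = -1 /\ 0 <= y /\ x^+2 + y^+2 = 1 /\ 9/10 <= x.
Proof.
have [x [y [e [h [y0 [n1 m]]]]]] := epi_spec (isT : (1 < 9)%N).
exists x, y; do 4! split => //.
have [X [Y [X0 [Y0 [_ h9]]]]] := big_root9.
by apply: le_trans X0 (m _ _ Y0 h9).
Qed.

Lemma aa3 : aa ^+ 3 != -1.
Proof.
have [x [y [-> [_ [_ [_ hx]]]]]] := aa_spec.
apply/eqP => /cube_case [[h _]|[h _]]; lra.
Qed.

Lemma cc_aa : cc = aa ^+ 3.
Proof.
have [x [y [ea [ha [y0 [n1 hx]]]]]] := aa_spec.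
have [p [q [ec [hc [q0 [_ mc]]]]]] := epi_spec (isT : (1 < 3)%N).
rewrite -/cc in ec hc.
have ha3 : (aa ^+ 3) ^+ 3 = -1 by rewrite -exprM.
move: (ha3); rewrite ea cx3.
set u := _ - _; set v := _ - _ => hu.
have v0 : 0 <= v.
  have -> : v = y * (3*x^+2 - y^+2) by rewrite /v; ring.
  by apply: mulr_ge0 => //; nra.
have e3 : aa ^+ 3 = cx u v by rewrite ea cx3.
clearbody u v.
case: (cube_case hu) => [[u1 v1]|[u1 v1]].
  by exfalso; move/eqP: aa3; apply; rewrite e3 u1 v1 -cxN1.
have pu := mc _ _ v0 hu.
move: hc; rewrite ec => /cube_case [[p1 _]|[p1 q1]]; first by exfalso; clear -pu u1 p1; lra.
have qv : q = v by clear -q0 v0 v1 q1; nra.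
by rewrite p1 qv u1.
Qed.

Lemma half_angle X Y : 9/10 <= X -> Y^+2 = 1 - X^+2 -> 0 <= Y ->
  exists U V, 0 <= V /\ U^+2 = (1+X)/2 /\ 0 < U /\ cx U V ^+ 2 = cx X Y.
Proof.
move=> X0 YY Y0.
have X1 : X <= 1 by nra.
pose U := Num.sqrt ((1 + X) / 2).
have U0 : 0 < U by rewrite sqrtr_gt0; lra.
have UU : U^+2 = (1 + X) / 2 by rewrite sqr_sqrtr //; lra.
pose V := Y / (2 * U).
have V0 : 0 <= V by rewrite /V; apply: divr_ge0 => //; lra.
have Un : U != 0 by rewrite gt_eqF.
exists U, V; do 3! split => //.
rewrite expr2 cxM; congr cx.
- rewrite /V.
  have -> : U * U - Y / (2 * U) * (Y / (2 * U)) = U^+2 - Y^+2 / (4 * U^+2).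
    by field.
  rewrite UU YY; field; lra.
- by rewrite /V; field.
Qed.

Lemma bb6 : bb ^+ 6 != -1.
Proof.
have [x [y [eb [hb [y0 [n1 m]]]]]] := epi_spec (isT : (1 < 18)%N).
have [X [Y [X0 [Y0 [YY h9]]]]] := big_root9.
have [U [V [V0 [UU [U0 hUV]]]]] := half_angle X0 YY Y0.
have h18 : cx U V ^+ 18 = -1 by rewrite (_ : 18 = 2 * 9)%N // exprM hUV.
have Ux := m _ _ V0 h18.
rewrite /bb eb; apply/eqP.
rewrite (_ : 6 = 2 * 3)%N // exprM expr2 cxM => /cube_case [[h _]|[h _]];
 clear -h Ux UU U0 X0 n1; nra.
Qed.


Lemma N1ne1 : (-1 : algC) <> 1.
Proof. by move=> h; have := @ltr01 algC; rewrite -h oppr_gt0 ltr10. Qed.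

Lemma aa9 : aa ^+ 9 = -1. Proof. by rewrite /aa /epi rootCK. Qed.
Lemma aa18 : aa ^+ 18 = 1.
Proof. by rewrite (_ : 18 = 9 * 2)%N // exprM aa9 expr2 mulrNN mulr1. Qed.
Lemma bb18 : bb ^+ 18 = -1. Proof. by rewrite /bb /epi rootCK. Qed.

Lemma eta9E : Defs.eta 9 = aa ^+ 2. Proof. reflexivity. Qed.
Lemma eta18E : Defs.eta 18 = bb ^+ 2. Proof. reflexivity. Qed.
Lemma eta2E : Defs.eta 2 = -1. Proof. by rewrite /Defs.eta /epi rootCK. Qed.
Lemma omegaE : omega = aa ^+ 6.
Proof. by rewrite /omega /Defs.eta -/(epi 3) -/cc cc_aa -exprM. Qed.

Lemma prim9 : 9.-primitive_root (aa ^+ 2).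
Proof.
have h : (aa ^+ 2) ^+ 9 = 1 by rewrite -exprM mulnC aa18.
have [m pm dm] := prim_order_exists (isT : (0 < 9)%N) h.
have em := prim_expr_order pm.
have mle : (m <= 9)%N by apply: dvdn_leq.
suff : (aa ^+ 2) ^+ 3 != 1.
  move/negP; case: m pm dm em mle => [|[|[|[|[|[|[|[|[|[|m]]]]]]]]]] //= pm dm em mle;
  try (by case); rewrite ?(expr_dvd em) //.
apply/negP => /eqP h3; move/eqP: aa3; apply.
have : aa ^+ 9 = aa ^+ 3 * (aa ^+ 2) ^+ 3 by rewrite -!exprM -exprD.
by rewrite h3 mulr1 aa9.
Qed.

Lemma prim18 : 18.-primitive_root (bb ^+ 2).
Proof.
have h : (bb ^+ 2) ^+ 18 = 1 by rewrite -exprM mulnC exprM bb18 expr2 mulrNN mulr1.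
have [m pm dm] := prim_order_exists (isT : (0 < 18)%N) h.
have em := prim_expr_order pm.
have mle : (m <= 18)%N by apply: dvdn_leq.
have h9 : (bb ^+ 2) ^+ 9 != 1 by rewrite -exprM mulnC bb18; apply/eqP; exact: N1ne1.
have h6 : (bb ^+ 2) ^+ 6 != 1.
  apply/negP => /eqP h3; move/eqP: bb6; apply.
  have : bb ^+ 18 = bb ^+ 6 * (bb ^+ 2) ^+ 6 by rewrite -!exprM -exprD.
  by rewrite h3 mulr1 bb18.
move: h9 h6.
case: m pm dm em mle => [|[|[|[|[|[|[|[|[|[|[|[|[|[|[|[|[|[|[|m]]]]]]]]]]]]]]]]]]] //= pm dm em mle;
  try by [move=> /negP[]; rewrite (expr_dvd em) | move=> _ /negP[]; rewrite (expr_dvd em)].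
Qed.


Definition md := (seq nat * seq nat)%type.

Definition M (x : algC) (d : md) : 'M[algC]_3 :=
  \matrix_(i < 3, j < 3) if nth 0%N d.1 i == j then x ^+ nth 0%N d.2 i else 0.

Definition mmul (a b : md) : md :=
  ([seq nth 0%N b.1 (nth 0%N a.1 i) | i <- iota 0 3],
   [seq (nth 0%N a.2 i + nth 0%N b.2 (nth 0%N a.1 i))%N | i <- iota 0 3]).

Definition valid (d : md) := all (fun i => nth 0%N d.1 i < 3)%N (iota 0 3).

Definition eqmd (d e : md) :=
  [&& nth 0%N d.1 0 == nth 0%N e.1 0, nth 0%N d.1 1 == nth 0%N e.1 1,
      nth 0%N d.1 2 == nth 0%N e.1 2,
      nth 0%N d.2 0 %% 18 == nth 0%N e.2 0 %% 18,
      nth 0%N d.2 1 %% 18 == nth 0%N e.2 1 %% 18 &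
      nth 0%N d.2 2 %% 18 == nth 0%N e.2 2 %% 18]%N.

Definition idd : md := ([:: 0; 1; 2], [:: 0; 0; 0])%N.

Lemma ord3P (P : 'I_3 -> Prop) : P (@Ordinal 3 0 isT) -> P (@Ordinal 3 1 isT) ->
  P (@Ordinal 3 2 isT) -> forall i, P i.
Proof.
move=> h0 h1 h2 [[|[|[|i]]] hi] //.
- by rewrite (_ : Ordinal hi = Ordinal (isT : (0 < 3)%N)) //; apply: val_inj.
- by rewrite (_ : Ordinal hi = Ordinal (isT : (1 < 3)%N)) //; apply: val_inj.
- by rewrite (_ : Ordinal hi = Ordinal (isT : (2 < 3)%N)) //; apply: val_inj.
Qed.

Lemma M_eq x d e : x ^+ 18 = 1 -> eqmd d e -> M x d = M x e.
Proof.
move=> hx /and5P [p0 p1 p2 k0 /andP [k1 k2]].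
apply/matrixP => i j; rewrite !mxE.
have ex n : x ^+ n = x ^+ (n %% 18).
  by rewrite {1}(divn_eq n 18) exprD mulnC exprM hx expr1n mul1r.
move: i j; apply: ord3P => j /=.
- by rewrite (eqP p0) ex (eqP k0) -ex.
- by rewrite (eqP p1) ex (eqP k1) -ex.
- by rewrite (eqP p2) ex (eqP k2) -ex.
Qed.

Lemma valid_nth d : valid d -> forall i : 'I_3, (nth 0%N d.1 i < 3)%N.
Proof. by move=> /and4P [v0 v1 v2 _]; apply: ord3P. Qed.

Lemma mmul1 d e i : (i < 3)%N -> nth 0%N (mmul d e).1 i = nth 0%N e.1 (nth 0%N d.1 i).
Proof. by case: i => [|[|[|i]]]. Qed.
Lemma mmul2 d e i : (i < 3)%N ->
  nth 0%N (mmul d e).2 i = (nth 0%N d.2 i + nth 0%N e.2 (nth 0%N d.1 i))%N.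
Proof. by case: i => [|[|[|i]]]. Qed.

Lemma M_mul x d e : valid d -> M x d *m M x e = M x (mmul d e).
Proof.
move=> vd; apply/matrixP => i j; rewrite !mxE.
have hm := valid_nth vd i.
rewrite (bigD1 (Ordinal hm)) //= big1 ?addr0.
  rewrite !mxE /= eqxx mmul1 // mmul2 //.
  by case: ifP; rewrite ?mulr0 // exprD.
move=> k hk; rewrite !mxE.
have -> : (nth 0%N d.1 i == k) = false.
  apply: negbTE; apply: contra hk => /eqP h; apply/eqP; apply: val_inj => /=.
  by rewrite -h.
by rewrite mul0r.
Qed.

Lemma M_id x : M x idd = 1%:M.
Proof.
apply/matrixP => i j; rewrite !mxE.
move: i j; apply: ord3P => j /=; move: j; apply: ord3P => //=; rewrite ?expr0 //.
Qed.

Lemma valid_mul d e : valid d -> valid e -> valid (mmul d e).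
Proof.
move=> vd ve; apply/and4P; split => //; rewrite mmul1 //.
- exact: (valid_nth ve (Ordinal (valid_nth vd (@Ordinal 3 0 isT)))).
- exact: (valid_nth ve (Ordinal (valid_nth vd (@Ordinal 3 1 isT)))).
- exact: (valid_nth ve (Ordinal (valid_nth vd (@Ordinal 3 2 isT)))).
Qed.


Fixpoint wordd (ds : seq md) (w : seq nat) : md :=
  if w is i :: w' then mmul (nth idd ds i) (wordd ds w') else idd.
Fixpoint wordm (gs : seq 'M[algC]_3) (w : seq nat) : 'M[algC]_3 :=
  if w is i :: w' then nth 0 gs i *m wordm gs w' else 1%:M.

Lemma gen_word gs w : all (fun i => i < size gs)%N w -> gen gs (wordm gs w).
Proof.
elim: w => [|i w IH] /=; first by move=> _; apply: gen_one.
move=> /andP [hi hw]; apply: gen_mul (IH hw); apply: gen_in; exact: mem_nth.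
Qed.

Lemma wordm_M x ds w : all valid ds -> all (fun i => i < size ds)%N w ->
  wordm (map (M x) ds) w = M x (wordd ds w).
Proof.
move=> vds; elim: w => [|i w IH] /=; first by rewrite M_id.
move=> /andP [hi hw]; rewrite IH // (nth_map idd) // M_mul //.
by apply: (allP vds); exact: mem_nth.
Qed.

Lemma in_word x ds w t : x ^+ 18 = 1 -> all valid ds -> all (fun i => i < size ds)%N w ->
  eqmd t (wordd ds w) -> gen (map (M x) ds) (M x t).
Proof.
move=> hx vds hw ht; rewrite (M_eq hx ht) -wordm_M //.
by apply: gen_word; rewrite size_map.
Qed.

Lemma gen_sub3 a b c T : gen T a -> gen T b -> gen T c ->
  forall x, gen [:: a; b; c] x -> gen T x.
Proof.
move=> ha hb hc x; elim => {x}.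
- move=> x; rewrite !inE => /or3P [] /eqP -> //.
- exact: gen_one.
- by move=> x y _ hx _ hy; apply: gen_mul.
- by move=> x _ hx; apply: gen_inv.
Qed.

Lemma invmx_mul (A B : 'M[algC]_3) : A \in unitmx -> B \in unitmx ->
  invmx (A *m B) = invmx B *m invmx A.
Proof.
move=> uA uB; have uAB : A *m B \in unitmx by rewrite unitmx_mul uA.
have h : (A *m B) *m (invmx B *m invmx A) = 1%:M.
  by rewrite mulmxA -(mulmxA A) mulmxV // mulmx1 mulmxV.
by rewrite -[RHS]mul1mx -(mulVmx uAB) -mulmxA h mulmx1.
Qed.

Lemma invmx_conj (Q x : 'M[algC]_3) : Q *m Q = 1%:M ->
  invmx (Q *m x *m Q) = Q *m invmx x *m Q.
Proof.
move=> QQ; have uQ : Q \in unitmx by case: (mulmx1_unit QQ).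
have iQ : invmx Q = Q by rewrite -[LHS]mulmx1 -QQ mulmxA mulVmx // mul1mx.
case ux : (x \in unitmx).
  rewrite invmx_mul ?unitmx_mul ?uQ ?ux // invmx_mul // iQ.
  by rewrite mulmxA.
have nu : Q *m x *m Q \notin unitmx by rewrite !unitmx_mul ux andbF.
rewrite invmx_out ?inE //.
by rewrite (invmx_out (x := x)) // inE ux.
Qed.

Lemma conj_gen (Q : 'M[algC]_3) S T : Q *m Q = 1%:M ->
  (forall s, s \in S -> gen T (Q *m s *m Q)) ->
  forall x, gen S x -> gen T (Q *m x *m Q).
Proof.
move=> QQ hS x; elim => {x}.
- exact: hS.
- by rewrite mulmx1 QQ; apply: gen_one.
- move=> x y _ hx _ hy.
  have -> : Q *m (x *m y) *m Q = (Q *m x *m Q) *m (Q *m y *m Q).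
    by rewrite !mulmxA -(mulmxA _ Q Q) QQ mulmx1.
  exact: gen_mul.
- move=> x _ hx; rewrite -invmx_conj //; exact: gen_inv.
Qed.


Definition ee := bb ^+ 2.
Lemma ee9 : ee ^+ 9 = -1. Proof. by rewrite /ee -exprM bb18. Qed.
Lemma aa18' : aa ^+ 18 = 1. Proof. exact: aa18. Qed.
Lemma ee18 : ee ^+ 18 = 1.
Proof. by rewrite (_ : 18 = 9 * 2)%N // exprM ee9 expr2 mulrNN mulr1. Qed.

Definition dF9 : md := ([:: 0; 1; 2], [:: 2; 2; 14])%N.
Definition dF18 : md := ([:: 0; 1; 2], [:: 1; 1; 16])%N.
Definition dE : md := ([:: 1; 2; 0], [:: 0; 0; 0])%N.
Definition dG01 : md := ([:: 0; 2; 1], [:: 0; 9; 0])%N.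
Definition dG00 : md := ([:: 0; 2; 1], [:: 0; 0; 9])%N.
Definition dG11 : md := ([:: 0; 2; 1], [:: 9; 9; 9])%N.

Lemma mx3_M x (d : md) a b c d' e f g h k :
  a = M x d (@Ordinal 3 0 isT) (@Ordinal 3 0 isT) ->
  b = M x d (@Ordinal 3 0 isT) (@Ordinal 3 1 isT) ->
  c = M x d (@Ordinal 3 0 isT) (@Ordinal 3 2 isT) ->
  d' = M x d (@Ordinal 3 1 isT) (@Ordinal 3 0 isT) ->
  e = M x d (@Ordinal 3 1 isT) (@Ordinal 3 1 isT) ->
  f = M x d (@Ordinal 3 1 isT) (@Ordinal 3 2 isT) ->
  g = M x d (@Ordinal 3 2 isT) (@Ordinal 3 0 isT) ->
  h = M x d (@Ordinal 3 2 isT) (@Ordinal 3 1 isT) ->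
  k = M x d (@Ordinal 3 2 isT) (@Ordinal 3 2 isT) ->
  mx3 a b c d' e f g h k = M x d.
Proof.
move=> *; apply/matrixP; apply: ord3P; apply: ord3P; rewrite mxE //.
Qed.

Lemma inv_exp (y : algC) m n : y ^+ (m + n) = 1 -> (y ^+ m)^-1 = y ^+ n.
Proof.
move=> h; have nz : y ^+ m != 0.
  by apply/eqP => h0; move: h; rewrite exprD h0 mul0r => /eqP; rewrite eq_sym oner_eq0.
by rewrite -[LHS]mulr1 -h exprD mulrA mulVf // mul1r.
Qed.

Lemma Fmx9E : Fmx 9 1 1 = M aa dF9.
Proof.
rewrite /Fmx; apply: mx3_M; rewrite ?mxE //=.
- rewrite (_ : -1 - 1 = - (2%:Z)) // -exprnN /Defs.eta -/aa -exprM.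
  exact: (@inv_exp _ 4 14 aa18).
Qed.

Lemma Fmx18E : Fmx 18 1 1 = M ee dF18.
Proof.
rewrite /Fmx; apply: mx3_M; rewrite ?mxE //=.
- rewrite (_ : -1 - 1 = - (2%:Z)) // -exprnN /Defs.eta -/bb -/ee.
  exact: (@inv_exp _ 2 16 ee18).
Qed.

Lemma EmxE x : Emx = M x dE.
Proof. by rewrite /Emx; apply: mx3_M; rewrite ?mxE //= expr0. Qed.

Lemma Gt01E x : x ^+ 9 = -1 -> Gtmx 2 0 1 = M x dG01.
Proof.
move=> hx; rewrite /Gtmx; apply: mx3_M; rewrite ?mxE //= ?expr0 ?hx ?eta2E.
- by rewrite expr1z.
- by rewrite (_ : - 0 - 1 = -1) // exprN1 invrN1 opprK.
Qed.


Lemma Gt00E x : x ^+ 9 = -1 -> Gtmx 2 0 0 = M x dG00.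
Proof.
move=> hx; rewrite /Gtmx; apply: mx3_M; rewrite ?mxE //= ?expr0 ?hx ?eta2E.
Qed.


Lemma Gt11E x : x ^+ 9 = -1 -> Gtmx 2 1 1 = M x dG11.
Proof.
move=> hx; rewrite /Gtmx; apply: mx3_M; rewrite ?mxE //= ?expr0 ?hx ?eta2E.
- by rewrite expr1z.
- by rewrite expr1z.
- by rewrite (_ : - 1 - 1 = - (2%:Z)) // -exprnN expr2 mulrNN mulr1 invr1.
Qed.



Lemma mx3_mul (a1 a2 a3 a4 a5 a6 a7 a8 a9 b1 b2 b3 b4 b5 b6 b7 b8 b9 : algC) :
  mx3 a1 a2 a3 a4 a5 a6 a7 a8 a9 *m mx3 b1 b2 b3 b4 b5 b6 b7 b8 b9 =
  mx3 (a1*b1 + a2*b4 + a3*b7) (a1*b2 + a2*b5 + a3*b8) (a1*b3 + a2*b6 + a3*b9)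
      (a4*b1 + a5*b4 + a6*b7) (a4*b2 + a5*b5 + a6*b8) (a4*b3 + a5*b6 + a6*b9)
      (a7*b1 + a8*b4 + a9*b7) (a7*b2 + a8*b5 + a9*b8) (a7*b3 + a8*b6 + a9*b9).
Proof.
apply/matrixP; apply: ord3P; apply: ord3P;
  rewrite !mxE !big_ord_recl big_ord0 !mxE /= addr0 addrA //.
Qed.

Lemma mx3_eq (a1 a2 a3 a4 a5 a6 a7 a8 a9 b1 b2 b3 b4 b5 b6 b7 b8 b9 : algC) :
  a1 = b1 -> a2 = b2 -> a3 = b3 -> a4 = b4 -> a5 = b5 -> a6 = b6 ->
  a7 = b7 -> a8 = b8 -> a9 = b9 ->
  mx3 a1 a2 a3 a4 a5 a6 a7 a8 a9 = mx3 b1 b2 b3 b4 b5 b6 b7 b8 b9.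
Proof. by move=> -> -> -> -> -> -> -> -> ->. Qed.

Lemma mx3_1 : mx3 1 0 0 0 1 0 0 0 1 = 1%:M.
Proof. apply/matrixP; apply: ord3P; apply: ord3P; rewrite !mxE //. Qed.

Definition ss : algC := sqrtC 2.
Definition tt : algC := ss^-1.
Lemma ss2 : ss ^+ 2 = 2. Proof. exact: sqrtCK. Qed.
Lemma ss0 : ss != 0.
Proof. by apply/eqP => h; have := ss2; rewrite h expr0n /= => /eqP; rewrite eq_sym pnatr_eq0. Qed.

Definition Qm : 'M[algC]_3 := mx3 tt 0 tt 0 1 0 tt 0 (- tt).

Lemma ttt : tt * tt = 2^-1.
Proof. by rewrite /tt -invfM -expr2 ss2. Qed.

Lemma qhelp (c L R : algC) : L - R = c * (tt * tt - 2^-1) -> L = R.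
Proof. by rewrite ttt subrr mulr0 => /eqP; rewrite subr_eq0 => /eqP. Qed.

Ltac qsolve c := apply: (qhelp (c := c)); field; try done.

Lemma QQ : Qm *m Qm = 1%:M.
Proof.
rewrite /Qm mx3_mul -mx3_1; apply: mx3_eq.
qsolve (2%:R : algC). qsolve (0 : algC). qsolve (0 : algC).
qsolve (0 : algC). qsolve (0 : algC). qsolve (0 : algC).
qsolve (0 : algC). qsolve (0 : algC). qsolve (2%:R : algC).
Qed.

Lemma scale_mx3 (c a1 a2 a3 a4 a5 a6 a7 a8 a9 : algC) :
  c *: mx3 a1 a2 a3 a4 a5 a6 a7 a8 a9 = mx3 (c*a1) (c*a2) (c*a3) (c*a4) (c*a5) (c*a6) (c*a7) (c*a8) (c*a9).
Proof. apply/matrixP; apply: ord3P; apply: ord3P; rewrite !mxE //. Qed.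

Definition G1p : 'M[algC]_3 := mx3 0 0 (aa^+7) 0 (- aa^+4) 0 (aa^+7) 0 0.
Definition G2p : 'M[algC]_3 := mx3 0 (aa^+7) 0 (aa^+7) 0 0 0 0 (- aa^+4).
Definition FUMp : 'M[algC]_3 := mx3 (- omega) 0 0 0 (- omega) 0 0 0 omega.

Lemma G1E : Qm *m G1p *m Qm = G1mx.
Proof.
rewrite /Qm /G1p /G1mx -/aa !mx3_mul; apply: mx3_eq.
qsolve (2 * aa^+7). qsolve (0 : algC). qsolve (0 : algC).
qsolve (0 : algC). qsolve (0 : algC). qsolve (0 : algC).
qsolve (0 : algC). qsolve (0 : algC). qsolve (- 2 * aa^+7).
Qed.

Lemma G2E : Qm *m G2p *m Qm = G2mx.
Proof.
rewrite /Qm /G2p /G2mx /= -/aa -/ss -/tt !mx3_mul; apply: mx3_eq.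
qsolve (- aa^+4). qsolve (0 : algC). qsolve (aa^+4).
qsolve (0 : algC). qsolve (0 : algC). qsolve (0 : algC).
qsolve (aa^+4). qsolve (0 : algC). qsolve (- aa^+4).
Qed.

Lemma FUME : Qm *m FUMp *m Qm = FUMmx.
Proof.
rewrite /Qm /FUMp /FUMmx /Jmx scale_mx3 !mx3_mul; apply: mx3_eq.
qsolve (0 : algC). qsolve (0 : algC). qsolve (- 2 * omega).
qsolve (0 : algC). qsolve (0 : algC). qsolve (0 : algC).
qsolve (- 2 * omega). qsolve (0 : algC). qsolve (0 : algC).
Qed.


Definition dG1p : md := ([:: 2; 1; 0], [:: 7; 13; 7])%N.
Definition dG2p : md := ([:: 1; 0; 2], [:: 7; 7; 13])%N.
Definition dFUMp : md := ([:: 0; 1; 2], [:: 15; 15; 6])%N.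
Definition dDM : md := ([:: 0; 1; 2], [:: 9; 9; 0])%N.

Lemma aa13 : aa ^+ 13 = - aa ^+ 4.
Proof. by rewrite (_ : 13 = 9 + 4)%N // exprD aa9 mulN1r. Qed.
Lemma aa15 : aa ^+ 15 = - omega.
Proof. by rewrite (_ : 15 = 9 + 6)%N // exprD aa9 mulN1r omegaE. Qed.

Lemma G1pM : G1p = M aa dG1p.
Proof. by rewrite /G1p; apply: mx3_M; rewrite ?mxE //= aa13. Qed.
Lemma G2pM : G2p = M aa dG2p.
Proof. by rewrite /G2p; apply: mx3_M; rewrite ?mxE //= aa13. Qed.
Lemma FUMpM : FUMp = M aa dFUMp.
Proof. by rewrite /FUMp; apply: mx3_M; rewrite ?mxE //= ?aa15 ?omegaE. Qed.

Lemma inw x ds w t : x ^+ 18 = 1 ->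
  all valid ds && all (fun i => i < size ds)%N w && eqmd t (wordd ds w) ->
  gen (map (M x) ds) (M x t).
Proof. by move=> hx /andP [/andP [h1 h2] h3]; exact: in_word hx h1 h2 h3. Qed.

Ltac inwa w := apply: (@inw _ _ w); [exact: aa18 | by []].
Ltac inwe w := apply: (@inw _ _ w); [exact: ee18 | by []].

Definition H := gen (map (M aa) [:: dF9; dE; dG01]).

Lemma D901E : Dgrp 9 1 1 2 0 1 = H.
Proof. by rewrite /Dgrp Fmx9E (EmxE aa) (Gt01E aa9). Qed.
Lemma D900E : Dgrp 9 1 1 2 0 0 = gen (map (M aa) [:: dF9; dE; dG00]).
Proof. by rewrite /Dgrp Fmx9E (EmxE aa) (Gt00E aa9). Qed.
Lemma D911E : Dgrp 9 1 1 2 1 1 = gen (map (M aa) [:: dF9; dE; dG11]).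
Proof. by rewrite /Dgrp Fmx9E (EmxE aa) (Gt11E aa9). Qed.
Lemma D18E r s dG : Gtmx 2 r s = M ee dG ->
  Dgrp 18 1 1 2 r s = gen (map (M ee) [:: dF18; dE; dG]).
Proof. by move=> h; rewrite /Dgrp Fmx18E (EmxE ee) h. Qed.
Lemma FrE : Fr162x4 = gen [:: G1mx; G2mx; FUMmx].
Proof. by []. Qed.

Lemma set_eq_sym P Q : set_eq P Q -> set_eq Q P.
Proof. by move=> h x; split => /h. Qed.
Lemma set_eq_trans P Q R : set_eq P Q -> set_eq Q R -> set_eq P R.
Proof. by move=> h1 h2 x; split => [/h1/h2|/h2/h1]. Qed.

Lemma H_D900 : set_eq H (gen (map (M aa) [:: dF9; dE; dG00])).
Proof.
move=> x; split; apply: gen_sub3.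
- inwa [:: 0%N]. - inwa [:: 1%N]. - inwa [:: 1; 2; 1]%N.
- inwa [:: 0%N]. - inwa [:: 1%N]. - inwa [:: 2; 2; 2]%N.
Qed.

Lemma H_Fr : set_eq H (gen (map (M aa) [:: dG1p; dG2p; dFUMp])).
Proof.
move=> x; split; apply: gen_sub3.
- inwa [:: 1; 1; 2; 2; 2; 2]%N. - inwa [:: 1; 0; 0; 1; 1; 0; 2; 2]%N.
- inwa [:: 0; 1; 0; 2; 2; 2]%N.
- inwa [:: 0; 2; 2; 1; 2; 0]%N. - inwa [:: 2; 0; 1; 2; 0; 2]%N.
- inwa [:: 0; 0; 0; 2; 1; 2; 1]%N.
Qed.

Lemma diagMx x k0 k1 k2 :
  M x ([:: 0; 1; 2], [:: k0; k1; k2])%N = mx3 (x^+k0) 0 0 0 (x^+k1) 0 0 0 (x^+k2).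
Proof. by symmetry; apply: mx3_M; rewrite ?mxE. Qed.

Lemma diag_pow x ds i k0 k1 k2 :
  nth idd ds i = ([:: 0; 1; 2], [:: k0; k1; k2])%N -> (i < size ds)%N ->
  forall j, gen (map (M x) ds) (M x ([:: 0; 1; 2], [:: j * k0; j * k1; j * k2])%N).
Proof.
move=> hd hi; elim => [|j IH].
  by rewrite !mul0n (_ : (_, _) = idd) // M_id; apply: gen_one.
have -> : ([:: 0; 1; 2], [:: j.+1 * k0; j.+1 * k1; j.+1 * k2])%N =
   mmul ([:: 0; 1; 2], [:: k0; k1; k2])%N ([:: 0; 1; 2], [:: j * k0; j * k1; j * k2])%N.
  by rewrite /mmul /= !mulSn.
rewrite -M_mul //; apply: gen_mul IH; apply: gen_in.
by rewrite -hd -(nth_map idd 0) // mem_nth // size_map.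
Qed.

Lemma M_eqk x d e : x ^+ 18 = 1 -> d.1 = e.1 ->
  (nth 0%N d.2 0 = nth 0%N e.2 0 %[mod 18])%N ->
  (nth 0%N d.2 1 = nth 0%N e.2 1 %[mod 18])%N ->
  (nth 0%N d.2 2 = nth 0%N e.2 2 %[mod 18])%N -> M x d = M x e.
Proof.
move=> hx h1 k0 k1 k2; apply: M_eq => //.
by rewrite /eqmd h1 !eqxx k0 k1 k2 !eqxx.
Qed.

Lemma F9_in_D18 dG : gen (map (M ee) [:: dF18; dE; dG]) (M aa dF9).
Proof.
have h : (aa ^+ 2) ^+ 18 = 1 by rewrite -exprM mulnC exprM aa18 expr1n.
have [[j hj0] /= hj] := prim_rootP prim18 h.
rewrite -/ee in hj.
have -> : M aa dF9 = M ee ([:: 0; 1; 2], [:: j * 1; j * 1; j * 16])%N.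
  rewrite /dF9 !diagMx !muln1 -hj; congr mx3.
  by rewrite exprM -hj -exprM (_ : (2 * 16 = 18 + 14)%N) // exprD aa18 mul1r.
by apply: (@diag_pow ee [:: dF18; dE; dG] 0 1 1 16 erefl erefl j).
Qed.

Lemma F18_in_H : H (M ee dF18).
Proof.
have h : (- ee) ^+ 9 = 1 by rewrite exprNn -signr_odd /= expr1 ee9 mulN1r opprK.
have [[i hi0] /= hi] := prim_rootP prim9 h.
have he : ee = aa ^+ (9 + 2 * i) by rewrite exprD aa9 mulN1r exprM -hi opprK.
have -> : M ee dF18 = M aa ([:: 0; 1; 2], [:: i * 2 + 9; i * 2 + 9; i * 14 + 0])%N.
  apply: (@eq_trans _ _ (M aa ([:: 0; 1; 2], [:: 9 + 2 * i; 9 + 2 * i; 16 * (9 + 2 * i)])%N)).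
    by rewrite /dF18 !diagMx expr1 he -exprM (mulnC (9 + 2 * i)).
  apply: M_eqk; rewrite ?aa18 //=; apply/eqP; lia.
rewrite -[X in M aa X]/(mmul ([:: 0; 1; 2], [:: i * 2; i * 2; i * 14]) dDM)%N.
rewrite -M_mul //; apply: gen_mul.
  by apply: (@diag_pow _ _ 0).
inwa [:: 2; 1; 2; 1]%N.
Qed.

Lemma H_D18 r s dG : Gtmx 2 r s = M aa dG -> Gtmx 2 r s = M ee dG ->
  H (M aa dG) -> gen (map (M ee) [:: dF18; dE; dG]) (M ee dG01) ->
  set_eq H (Dgrp 18 1 1 2 r s).
Proof.
move=> ha he hH h01; rewrite (D18E he) => x; split; apply: gen_sub3.
- exact: F9_in_D18.
- by rewrite -(EmxE aa) (EmxE ee); apply: gen_in; rewrite !inE eqxx orbT.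
- by rewrite -(Gt01E aa9) (Gt01E ee9).
- exact: F18_in_H.
- by rewrite -(EmxE ee) (EmxE aa); inwa [:: 1%N].
- by rewrite -he ha.
Qed.

Lemma H_D18_11 : set_eq H (Dgrp 18 1 1 2 1 1).
Proof.
apply: (H_D18 (Gt11E aa9) (Gt11E ee9)).
- inwa [:: 1; 2; 1; 2; 2]%N.
- inwe [:: 0; 0; 0; 0; 0; 0; 2; 0; 0; 0]%N.
Qed.
Lemma H_D18_00 : set_eq H (Dgrp 18 1 1 2 0 0).
Proof.
apply: (H_D18 (Gt00E aa9) (Gt00E ee9)).
- inwa [:: 2; 2; 2]%N.
- inwe [:: 1; 2; 1]%N.
Qed.
Lemma H_D18_01 : set_eq H (Dgrp 18 1 1 2 0 1).
Proof.
apply: (H_D18 (Gt01E aa9) (Gt01E ee9)).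
- inwa [:: 2]%N.
- inwe [:: 2]%N.
Qed.


Lemma QxQK x : Qm *m (Qm *m x *m Qm) *m Qm = x.
Proof. by rewrite !mulmxA QQ mul1mx -mulmxA QQ mulmx1. Qed.

Lemma in3 (T : eqType) (a b c s : T) (P : T -> Prop) : P a -> P b -> P c ->
  s \in [:: a; b; c] -> P s.
Proof. by move=> ha hb hc; rewrite !inE => /or3P [] /eqP ->. Qed.

Lemma iso_of P : set_eq P H -> grp_iso P Fr162x4.
Proof.
move=> hP; exists (fun x => Qm *m x *m Qm); split.
- move=> x /hP /H_Fr hx.
  rewrite /Fr162x4; apply: (conj_gen (T := [:: G1mx; G2mx; FUMmx]) QQ _ hx) => s.
  rewrite !inE => /or3P [] /eqP -> ; apply: gen_in.
  + by rewrite -G1pM G1E !inE eqxx.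
  + by rewrite -G2pM G2E !inE eqxx orbT.
  + by rewrite -FUMpM FUME !inE eqxx !orbT.
- by move=> x y _ _ h; rewrite -(QxQK x) h QxQK.
- move=> y hy; exists (Qm *m y *m Qm); last exact: QxQK.
  apply/hP/H_Fr.
  apply: (conj_gen (S := [:: G1mx; G2mx; FUMmx]) QQ _ hy) => s.
  rewrite !inE => /or3P [] /eqP -> ; apply: gen_in.
  + by rewrite -G1E QxQK G1pM !inE eqxx.
  + by rewrite -G2E QxQK G2pM !inE eqxx orbT.
  + by rewrite -FUME QxQK FUMpM !inE eqxx !orbT.
- by move=> x y _ _; rewrite !mulmxA -(mulmxA _ Qm Qm) QQ mulmx1.
Qed.

Inductive sg (S : seq 'M[algC]_3) : 'M[algC]_3 -> Prop :=
  | sg_in x : x \in S -> sg S x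
  | sg_one : sg S 1%:M
  | sg_mul x y : sg S x -> sg S y -> sg S (x *m y).

Lemma sg_word gs w : all (fun i => i < size gs)%N w -> sg gs (wordm gs w).
Proof.
elim: w => [|i w IH] /=; first by move=> _; apply: sg_one.
move=> /andP [hi hw]; apply: sg_mul (IH hw); apply: sg_in; exact: mem_nth.
Qed.

Lemma gen_sg S : (forall s, s \in S -> exists2 w, sg S w & s *m w = 1%:M) ->
  forall x, gen S x -> [/\ sg S x, sg S (invmx x) & x \in unitmx].
Proof.
move=> hS x; elim => {x}.
- move=> s hs; have [w hw sw] := hS s hs.
  have [us uw] := mulmx1_unit sw.
  have -> : invmx s = w by rewrite -[LHS]mulmx1 -sw mulmxA mulVmx // mul1mx.
  by split => //; apply: sg_in.
- by rewrite invmx1; split; [apply: sg_one | apply: sg_one | apply: unitmx1].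
- move=> x y _ [hx ix ux] _ [hy iy uy]; split.
  + exact: sg_mul.
  + by rewrite invmx_mul //; apply: sg_mul.
  + by rewrite unitmx_mul ux.
- by move=> x _ [hx ix ux]; rewrite invmxK unitmx_inv.
Qed.

Definition pc (d : md) :=
  ((nth 0%N d.2 0 %% 2 == nth 0%N d.2 1 %% 2) && (nth 0%N d.2 1 %% 2 == nth 0%N d.2 2 %% 2))%N.

Lemma pcP d : pc d -> forall n, (n < 3)%N -> (nth 0%N d.2 n %% 2 = nth 0%N d.2 0 %% 2)%N.
Proof.
move=> /andP [/eqP h1 /eqP h2] [|[|[|n]]] //= _.
by rewrite -h2 h1.
Qed.

Lemma pc_mul d e : valid d -> pc d -> pc e -> pc (mmul d e).
Proof.
move=> vd pd pe.
have key n : (n < 3)%N -> (nth 0%N (mmul d e).2 n %% 2 = (nth 0%N d.2 0 + nth 0%N e.2 0) %% 2)%N.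
  move=> hn; rewrite mmul2 // -modnDm (pcP pd hn) (pcP pe (valid_nth vd (Ordinal hn))).
  by rewrite modnDm.
by rewrite /pc !key // !eqxx.
Qed.

Lemma inv_sg ds : all valid ds -> all pc ds ->
  forall X, sg (map (M aa) ds) X -> exists d, [/\ X = M aa d, valid d & pc d].
Proof.
move=> vds pds X; elim => {X}.
- move=> X /mapP [d hd ->]; exists d; split => //.
  + exact: (allP vds).
  + exact: (allP pds).
- by exists idd; rewrite M_id.
- move=> X Y _ [d [-> vd pd]] _ [e [-> ve pe]].
  exists (mmul d e); split.
  + exact: M_mul.
  + exact: valid_mul.
  + exact: pc_mul.
Qed.

Lemma expr_mod18 n : aa ^+ n = aa ^+ (n %% 18).
Proof. by rewrite {1}(divn_eq n 18) exprD mulnC exprM aa18 expr1n mul1r. Qed.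

Lemma not_pc d : M aa dG01 = M aa d -> pc d -> False.
Proof.
move=> h pd.
have h00 := congr1 (fun A : 'M[algC]_3 => A (@Ordinal 3 0 isT) (@Ordinal 3 0 isT)) h.
have h12 := congr1 (fun A : 'M[algC]_3 => A (@Ordinal 3 1 isT) (@Ordinal 3 2 isT)) h.
move: h00 h12; rewrite !mxE /= expr0 aa9.
case: ifP => _; last by move/eqP; rewrite oner_eq0.
case: ifP => _; last first.
  by move=> _ /eqP; rewrite oppr_eq0 oner_eq0.
move=> e0 e1.
move/andP: pd => [/eqP p1 _].
have : (aa ^+ nth 0 d.2 0) ^+ 9 = (aa ^+ nth 0 d.2 1) ^+ 9.
  rewrite -!exprM expr_mod18 [in RHS]expr_mod18; congr (_ ^+ _).
  by rewrite (_ : 18 = 2 * 9)%N // -!muln_modl p1.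
rewrite -e0 -e1 expr1n -signr_odd /= expr1.
by move=> h1; apply: N1ne1; rewrite -h1.
Qed.

Lemma strict_part : strict_sub (Dgrp 9 1 1 2 1 1) (Dgrp 9 1 1 2 0 1).
Proof.
rewrite D911E D901E; split.
  apply: gen_sub3.
  - inwa [:: 0%N]. - inwa [:: 1%N]. - inwa [:: 1; 2; 1; 2; 2]%N.
exists (M aa dG01); split; first by inwa [:: 2%N].
move=> hx.
have hS : forall s, s \in map (M aa) [:: dF9; dE; dG11] ->
   exists2 w, sg (map (M aa) [:: dF9; dE; dG11]) w & s *m w = 1%:M.
  move=> s; rewrite /= !inE => /or3P [] /eqP ->.
  + exists (wordm (map (M aa) [:: dF9; dE; dG11]) (nseq 8 0%N)); first by apply: sg_word.
    rewrite wordm_M // M_mul // -(M_id aa); apply: M_eq; [exact: aa18 | by []].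
  + exists (wordm (map (M aa) [:: dF9; dE; dG11]) (nseq 2 1%N)); first by apply: sg_word.
    rewrite wordm_M // M_mul // -(M_id aa); apply: M_eq; [exact: aa18 | by []].
  + exists (wordm (map (M aa) [:: dF9; dE; dG11]) [:: 2%N]); first by apply: sg_word.
    rewrite wordm_M // M_mul // -(M_id aa); apply: M_eq; [exact: aa18 | by []].
have [hsg _ _] := gen_sg hS hx.
have [d [hd _ pd]] := inv_sg (isT : all valid [:: dF9; dE; dG11]) (isT : all pc [:: dF9; dE; dG11]) hsg.
exact: not_pc hd pd.
Qed.

Theorem theorem10 :
  strict_sub (Dgrp 9 1 1 2 1 1) (Dgrp 9 1 1 2 0 1) /\
  set_eq (Dgrp 9 1 1 2 0 1) (Dgrp 9 1 1 2 0 0) /\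
  set_eq (Dgrp 9 1 1 2 0 0) (Dgrp 18 1 1 2 1 1) /\
  set_eq (Dgrp 18 1 1 2 1 1) (Dgrp 18 1 1 2 0 0) /\
  set_eq (Dgrp 18 1 1 2 0 0) (Dgrp 18 1 1 2 0 1) /\
  grp_iso (Dgrp 9 1 1 2 0 1) Fr162x4 /\
  grp_iso (Dgrp 9 1 1 2 0 0) Fr162x4 /\
  grp_iso (Dgrp 18 1 1 2 1 1) Fr162x4 /\
  grp_iso (Dgrp 18 1 1 2 0 0) Fr162x4 /\
  grp_iso (Dgrp 18 1 1 2 0 1) Fr162x4.
Proof.
have e900 : set_eq H (Dgrp 9 1 1 2 0 0) by rewrite D900E; exact: H_D900.
have e901 : set_eq H (Dgrp 9 1 1 2 0 1) by rewrite D901E.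
split; first exact: strict_part.
split; first exact: set_eq_trans (set_eq_sym e901) e900.
split; first exact: set_eq_trans (set_eq_sym e900) H_D18_11.
split; first exact: set_eq_trans (set_eq_sym H_D18_11) H_D18_00.
split; first exact: set_eq_trans (set_eq_sym H_D18_00) H_D18_01.
split; first exact: iso_of (set_eq_sym e901).
split; first exact: iso_of (set_eq_sym e900).
split; first exact: iso_of (set_eq_sym H_D18_11).
split; first exact: iso_of (set_eq_sym H_D18_00).
exact: iso_of (set_eq_sym H_D18_01).
Qed.
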